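(* Let $n,k,d$ be integers with $1\le k\le d<n$, let $\alpha>0$, and let $i$ be an integer with $1\le i\le k$. Then $$C^{\mathrm{exact}}_{n,k,d}\left(\alpha,\frac{(d-k+i)\alpha}{d-k+1}\right)\ \ge\ \frac{n i\alpha}{n-k+i}.$$
   Context: A distributed storage system (DSS) with parameters $(n,k,d)$ stores a file across $n$ nodes, each storing an amount $\alpha$ of information (e.g. $\alpha$ symbols over a finite field, where symbols may be split into arbitrarily many sub-symbols), such that the file can be reconstructed from the contents of any $k$ nodes, and any lost node can be repaired by contacting any $d$ of the remaining nodes, each of which transmits an amount $\beta$ to the replacement node, for a total repair bandwidth $\gamma=d\beta$. Repair is exact: the replacement node stores exactly the same content as the lost node. $C^{\mathrm{exact}}_{n,k,d}(\alpha,\gamma)$ denotes the maximum size of a file that can be stored by such an exact-repair DSS with $n$ nodes, node size $\alpha$ and total repair bandwidth $\gamma$. *)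

(* Defs.v *)
From HB Require Import structures.
From mathcomp Require Import all_boot all_order all_algebra.
From mathcomp Require Import all_classical all_reals all_analysis.
Set Implicit Arguments. Unset Strict Implicit. Unset Printing Implicit Defensive.
Import Order.TTheory GRing.Theory Num.Theory.
Local Open Scope ring_scope.

(* An exact-repair DSS with n nodes: the file is an element of 'I_m,
   node j stores stor j x : 'I_S (storage alphabet of size S).
   - reconstruction: the contents of any k nodes determine the file;
   - exact repair: for any lost node j and any set H of d other nodes,
     there are helper maps (each helper h sends a symbol of 'I_T computed
     from its own content only; the maps may depend on j and H) such that
     the d transmitted symbols determine the content of node j exactly. *)
Definition is_exact_DSS (n k d m S T : nat) (stor : 'I_n -> 'I_m -> 'I_S) : Prop :=
  (forall K : {set 'I_n}, #|K| = k ->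
     forall x y : 'I_m, (forall j, j \in K -> stor j x = stor j y) -> x = y) /\
  (forall (j : 'I_n) (H : {set 'I_n}), #|H| = d -> j \notin H ->
     exists helper : 'I_n -> 'I_S -> 'I_T,
       forall x y : 'I_m,
         (forall h, h \in H -> helper h (stor h x) = helper h (stor h y)) ->
         stor j x = stor j y).

(* Information amounts are measured as ln(alphabet size) / u, where u > 0
   is an arbitrary unit (symbol size times number of sub-symbols);
   node size alpha means ln S <= alpha * u, total repair bandwidth gamma
   = d * beta means d * ln T <= gamma * u; the file size is ln m / u. *)
Definition exact_file_sizes {R : realType} (n k d : nat) (alpha gamma : R)
  : set (\bar R) :=
  [set z | exists (m S T : nat) (u : R) (stor : 'I_n -> 'I_m -> 'I_S),
      0 < u /\ is_exact_DSS k d T stor /\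
      ln (S%:R : R) <= alpha * u /\ d%:R * ln (T%:R : R) <= gamma * u /\
      z = (ln (m%:R : R) / u)%:E].

Definition C_exact {R : realType} (n k d : nat) (alpha gamma : R) : \bar R :=
  ereal_sup (exact_file_sizes n k d alpha gamma).

(* Main.v *)
Require Import Defs.
From HB Require Import structures.
From mathcomp Require Import all_boot all_order all_algebra.
From mathcomp Require Import all_classical all_reals all_analysis.
Import Order.TTheory GRing.Theory Num.Theory.
Local Open Scope ring_scope.
From mathcomp Require Import all_fingroup all_field zify.
From mathcomp Require Import ring lra.

Module LC.
Local Set Implicit Arguments. Local Unset Strict Implicit. Local Unset Printing Implicit Defensive.
Local Open Scope nat_scope.

Lemma card_rank (T : finType) (f : T -> nat) (m : nat) : injective f ->
  forall X : {set T},
  #|[set x in X | #|[set y in X | f y < f x]| < m]| = minn m #|X|.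
Proof.
move=> finj X; move: {2}#|X| (erefl #|X|) => N; elim: N X => [|N IH] X hX.
  move: hX => /eqP; rewrite cards_eq0 => /eqP ->.
  by rewrite cards0 minn0; apply/eqP; rewrite cards_eq0; apply/eqP/finset.setP => x; rewrite !inE.
have : (0 < #|X|)%N by rewrite hX.
rewrite card_gt0 => /set0Pn [x1 Hx1].
case: (@arg_maxnP _ x1 (mem X) f Hx1) => x0 Hx0 Hmax.
have {}Hx0 : x0 \in X := Hx0.
set X' := X :\ x0.
have hX' : #|X'| = N by move: hX; rewrite (cardsD1 x0) Hx0 => [[]].
have lt0 : forall y, y \in X' -> f y < f x0.
  move=> y; rewrite !inE => /andP [ne Hy]; rewrite ltn_neqAle; apply/andP; split; last exact: Hmax.
  by apply: contra ne => /eqP /finj ->.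
have rk : forall x, x \in X' ->
    [set y in X | f y < f x] = [set y in X' | f y < f x].
  move=> x Hx; apply/finset.setP => y; rewrite !inE.
  case: (y =P x0) => [-> | //]; rewrite /= Hx0.
  by rewrite ltnNge ltnW // lt0.
have rk0 : [set y in X | f y < f x0] = X'.
  apply/finset.setP => y; rewrite !inE; case: (y =P x0) => [-> | ne] /=; first by rewrite ltnn andbF.
  case Hy: (y \in X) => //=; apply: lt0; rewrite !inE Hy andbT; exact/eqP.
have -> : [set x in X | #|[set y in X | f y < f x]| < m] =
   [set x in X' | #|[set y in X' | f y < f x]| < m] :|: (if (N < m)%N then [set x0] else finset.set0).
  apply/finset.setP => x; rewrite !inE.
  case: (x =P x0) => [-> | ne].
    rewrite Hx0 rk0 hX' /=.
    by case: (N < m)%N; rewrite ?inE ?eqxx.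
  have ne' : (x == x0) = false by apply/eqP.
  case Hx: (x \in X) => /=; last first.
    by case: (N < m)%N; rewrite ?inE ?ne'.
  rewrite rk; last by rewrite !inE Hx andbT; exact/eqP.
  by case: (N < m)%N; rewrite ?inE ?orbF //; case: eqP => // _; rewrite orbF.
rewrite cardsU.
have dis : #|[set x in X' | #|[set y in X' | f y < f x]| < m] :&: (if (N < m)%N then [set x0] else finset.set0)| = 0.
  case: (N < m)%N; last by rewrite finset.setI0 cards0.
  apply/eqP; rewrite cards_eq0; apply/eqP/finset.setP => x; rewrite !inE.
  by case: (x =P x0) => [-> |]; rewrite ?andbF ?andbT //= !inE eqxx.
rewrite dis subn0 IH // hX'.
case: ltnP => h; rewrite ?cards1 ?cards0; lia.
Qed.


Lemma pigeon (A B : finType) (phi : A -> B) (b0 : B) :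
  exists b, #|A| <= #|B| * #|[set x | phi x == b]|.
Proof.
have h1 : #|A| = \sum_(b : B) #|[set x | phi x == b]|.
  rewrite -sum1_card (partition_big phi xpredT) //=.
  by apply: eq_bigr => b _; rewrite -sum1_card; apply: eq_bigl => x; rewrite inE.
have [b hb] : {b : B | \max_(b' : B) #|[set x | phi x == b']| = #|[set x | phi x == b]|}.
  by apply: bigop.eq_bigmax; apply/card_gt0P; exists b0.
exists b; rewrite h1 -hb -sum_nat_const.
by apply: leq_sum => b' _; apply: leq_bigmax.
Qed.


Lemma card_inv (T : finType) (g : T -> T) (P Q : pred T) :
  involutive g -> (forall x, P (g x) = Q x) -> #|[set x | P x]| = #|[set x | Q x]|.
Proof.
move=> ginv hPQ.
have -> : [set x | Q x] = g @^-1: [set x | P x] by apply/finset.setP => x; rewrite !inE hPQ.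
by rewrite card_preimset //; apply: inv_inj.
Qed.

Local Open Scope ring_scope.

Lemma vdm (F : fieldType) (I : finType) (P : pred I) (mu : I -> F) (x : I -> F) (r : nat) :
  {in P &, injective mu} -> (#|P| <= r)%N ->
  (forall t, (t < r)%N -> \sum_(e | P e) mu e ^+ t * x e = 0) ->
  forall e, P e -> x e = 0.
Proof.
move=> inj hr hs e0 Pe0.
pose s := [seq mu e | e <- enum [pred e | P e & e != e0]].
pose q := \prod_(c <- s) ('X - c%:P).
have sq : (size q <= r)%N.
  rewrite size_prod_XsubC size_map -cardE.
  move: hr; rewrite (cardD1 e0) [e0 \in _]Pe0 /=.
  suff -> : #|[pred e | P e & e != e0]| = #|[predD1 P & e0]| by [].
  by apply: eq_card => e; rewrite !inE andbC.
have H1 : \sum_(e | P e) x e * q.[mu e] = 0.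
  transitivity (\sum_(e | P e) \sum_(t < r) q`_t * (mu e ^+ t * x e)).
    apply: eq_bigr => e _; rewrite (horner_coef_wide _ sq) mulr_sumr.
    by apply: eq_bigr => t _; rewrite mulrC -mulrA.
  rewrite exchange_big /= big1 // => t _.
  by rewrite -mulr_sumr hs // mulr0.
rewrite (bigD1 e0) //= big1 ?addr0 in H1; last first.
  move=> e /andP [Pe ne].
  have : root q (mu e).
    rewrite root_prod_XsubC; apply/mapP; exists e => //.
    by rewrite mem_enum inE Pe ne.
  by move/eqP => ->; rewrite mulr0.
move: H1 => /eqP; rewrite mulf_eq0 => /orP [/eqP // | ].
rewrite horner_prod prodf_seq_eq0 => /hasP [c /mapP [e]].
rewrite mem_enum inE => /andP [Pe ne] -> /=.
rewrite hornerXsubC subr_eq0 => /eqP /inj.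
by move=> h; exfalso; move: ne; rewrite h // eqxx.
Qed.

Section Cons.
Variables (n k d i p : nat) (o0 : 'I_n).
Hypotheses (hk : (1 <= k)%N) (hkd : (k <= d)%N) (hdn : (d < n)%N)
  (hi : (1 <= i)%N) (hik : (i <= k)%N) (hp : prime p).
Definition s := (d - k).+1.
Definition w := (n - k + i)%N.
Definition r := (n - k)%N.
Definition dd := (d - k + i)%N.
Hypothesis hps : (n * s < p)%N.

Local Notation F := 'F_p.
Definition Ix := (({set 'I_n} * {ffun 'I_n -> 'I_s}) * {perm 'I_n})%type.
Definition lay (x : Ix) := x.1.1.
Definition av (x : Ix) := x.1.2.
Definition cp (x : Ix) := x.2.
Definition valid (j : 'I_n) (x : Ix) := (j \in lay x) && (#|lay x| == w).

Definition lam (x : 'I_n) (u : 'I_s) : F := (x * s + u)%:R.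

Lemma lam_inj x u x' u' : lam x u = lam x' u' -> x = x' /\ u = u'.
Proof.
rewrite /lam => /(congr1 (fun z : F => nat_of_ord z)); rewrite !val_Fp_nat // !modn_small; last first.
- move: hps; have := ltn_ord x; have := ltn_ord u; have := ltn_ord x'; have := ltn_ord u'; rewrite /s; nia.
- move: hps; have := ltn_ord x; have := ltn_ord u; have := ltn_ord x'; have := ltn_ord u'; rewrite /s; nia.
move=> h.
have h1 := congr1 (divn^~ s) h; have h2 := congr1 (modn^~ s) h.
move: h1 h2 => /=; rewrite !divnMDl // !modnMDl !divn_small ?modn_small // !addn0.
by move=> e1 e2; split; apply: val_inj.
Qed.

Definition chk (z : 'I_n * Ix -> F) (x : Ix) (t : nat) : F :=
  \sum_(j in lay x) lam j (av x j) ^+ t * z (j, x).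
Definition in_ker (z : 'I_n * Ix -> F) :=
  (forall j x, ~~ valid j x -> z (j, x) = 0) /\
  (forall x t, #|lay x| = w -> (t < r)%N -> chk z x t = 0).

Lemma recon_core z (K : {set 'I_n}) : in_ker z -> #|K| = k ->
  (forall j x, j \in K -> z (j, x) = 0) -> forall j x, z (j, x) = 0.
Proof.
move=> [zinv zchk] hK zK j x.
case hv: (valid j x); last by apply: zinv; rewrite hv.
case jK: (j \in K); first exact: zK.
move: hv => /andP [jA /eqP hA].
pose P := [pred l | (l \in lay x) && (l \notin K)].
apply: (@vdm _ _ P (fun l => lam l (av x l)) (fun l => z (l, x)) r); last by rewrite inE jA jK.
- by move=> l l' _ _ /lam_inj [].
- apply: leq_trans (_ : #|~: K| <= r)%N.
    by apply: subset_leq_card; apply/fintype.subsetP => l; rewrite !inE => /andP [].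
  by rewrite cardsCs finset.setCK card_ord hK.
- move=> t ht; transitivity (chk z x t); last exact: zchk. rewrite /chk.
  rewrite [RHS](bigID (fun l => l \in K)) /= [X in _ = X + _]big1 ?add0r //.
  by move=> l /andP [_ lK]; rewrite zK // mulr0.
Qed.

Definition upd (a : {ffun 'I_n -> 'I_s}) (j : 'I_n) (u : 'I_s) : {ffun 'I_n -> 'I_s} :=
  [ffun l => if l == j then u else a l].
Lemma upd_ne b j u l : l != j -> upd b j u l = b l.
Proof. by move=> lj; rewrite /upd ffunE (negbTE lj). Qed.
Lemma upd_eq b j u : upd b j u j = u.
Proof. by rewrite /upd ffunE eqxx. Qed.

Definition sel (H : {set 'I_n}) (x : Ix) : {set 'I_n} :=
  [set h in lay x :&: H |
     (#|[set y in lay x :&: H | (nat_of_ord (cp x y) < nat_of_ord (cp x h))%N]| < dd)%N].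
Definition Q (j : 'I_n) (H : {set 'I_n}) (h : 'I_n) (x : Ix) :=
  [&& valid j x, av x j == ord0 & h \in sel H x].

Lemma card_sel H x : #|sel H x| = minn dd #|lay x :&: H|.
Proof.
rewrite /sel; apply: (@card_rank _ (fun y => nat_of_ord (cp x y))).
by move=> y y' /val_inj /perm_inj.
Qed.

Lemma sel_sub H x : sel H x \subset lay x :&: H.
Proof. by apply/fintype.subsetP => y; rewrite inE => /andP []. Qed.

Lemma repair_core z j (H : {set 'I_n}) : in_ker z -> #|H| = d -> j \notin H ->
  (forall h x, h \in H -> Q j H h x ->
     \sum_(u : 'I_s) z (h, ((lay x, upd (av x) j u), cp x)) = 0) ->
  forall x, z (j, x) = 0.
Proof.
move=> [zinv zchk] hH jH hrep x.
case hv: (valid j x); last by apply: zinv; rewrite hv.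
move: hv => /andP [jA /eqP hA].
case: x jA hA => [[A a'] sg] /= jA hA; rewrite /lay /= in jA hA.
pose a := upd a' j ord0.
pose xu (u : 'I_s) : Ix := ((A, upd a j u), sg).
pose sl := sel H ((A, a), sg).
have hupd : forall u, upd a j u = upd a' j u.
  by move=> u; apply/ffunP => l; rewrite !ffunE; case: eqP.
have xua : xu (a' j) = ((A, a'), sg).
  by rewrite /xu hupd; congr (_, _, _); apply/ffunP => l; rewrite ffunE; case: eqP => [->|].
pose P := [pred e : 'I_s + 'I_n | if e is inr l then [&& l \in A, l != j & l \notin sl] else true].
pose mu (e : 'I_s + 'I_n) := match e with inl u => lam j u | inr l => lam l (a l) end.
pose X (e : 'I_s + 'I_n) := match e with inl u => z (j, xu u) | inr l => \sum_(u : 'I_s) z (l, xu u) end.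
suff hX : forall u, X (inl u) = 0 by rewrite -xua; apply: (hX (a' j)).
move=> u0; apply: (@vdm _ _ P mu X r) => //.
- move=> [u|l] [u'|l'] /=; rewrite !inE /=.
  + by move=> _ _ /lam_inj [_ ->].
  + by move=> _ /andP [_ /andP [lj _]] /lam_inj [ejl _]; move: lj; rewrite ejl eqxx.
  + by move=> /andP [_ /andP [lj _]] _ /lam_inj [ejl _]; move: lj; rewrite ejl eqxx.
  + by move=> _ _ /lam_inj [-> _].
- rewrite -sum1_card big_sumType /= sum1_card card_ord.
  have slsub : sl \subset A :\ j.
    apply/fintype.subsetP => y /(fintype.subsetP (sel_sub H ((A, a), sg))); rewrite !inE /lay /= => /andP [yA yH].
    by rewrite yA andbT; apply: contraNneq jH => <-.
  have hAH : (dd <= #|A :&: H|)%N.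
    have h1 := cardsID H A.
    have h2 : (#|A :\: H| <= n - d)%N.
      have <- : #|~: H| = (n - d)%N by rewrite cardsCs finset.setCK card_ord hH.
      apply: subset_leq_card.
      by apply/fintype.subsetP => y; rewrite !inE => /andP [].
    move: h1 h2; rewrite hA /w /dd; lia.
  have csl : #|sl| = dd by rewrite card_sel /lay /=; apply/minn_idPl.
  have -> : \sum_(l | P (inr l)) 1 = #|(A :\ j) :\: sl|.
    rewrite sum1dep_card; apply: eq_card => l; rewrite !inE /= andbA [(l != j) && _]andbC.
    by rewrite andbC andbA.
  rewrite cardsD (finset.setIidPr slsub) csl; have := cardsD1 j A; rewrite jA hA /s /r /w /dd; move: hdn hik hkd; lia.
- move=> t ht.
  have hsum : \sum_(u : 'I_s) chk z (xu u) t = 0.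
    by rewrite big1 // => u _; apply: zchk.
  rewrite -[RHS]hsum big_sumType /=.
  rewrite /chk /lay /=.
  under [RHS]eq_bigr => u _ do rewrite (bigD1 j jA) /= /av /= ffunE eqxx.
  rewrite big_split /=; congr (_ + _).
  rewrite [RHS]exchange_big /= [RHS](bigID (fun l => l \in sl)) /= [X in _ = X + _]big1 ?add0r.
    apply: eq_big => [l|l /and3P [_ lj _]].
      by rewrite -andbA.
    rewrite mulr_sumr; apply: eq_bigr => u _.
    by rewrite upd_ne.
  move=> l /andP [/andP [lA lj] lsl].
  rewrite /= in lA.
  have lH : l \in H.
    by move: (fintype.subsetP (sel_sub H ((A, a), sg)) l lsl); rewrite inE => /andP [].
  have hq : Q j H l ((A, a), sg).
    by rewrite /Q /valid /lay /av /= jA hA eqxx /a /upd ffunE eqxx.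
  have := hrep l ((A, a), sg) lH hq.
  under eq_bigr => u _ do rewrite upd_ne //.
  by rewrite -mulr_sumr => ->; rewrite mulr0.
Qed.

Lemma card_setE (T : finType) (P : pred T) : #|[set x | P x]| = (\sum_x (P x : nat))%N.
Proof. by rewrite -sum1dep_card big_mkcond; apply: eq_bigr => x _; case: (P x). Qed.

Definition mv (j : 'I_n) (x : Ix) : Ix := ((tperm o0 j @^-1: lay x, av x), cp x).
Definition Jt := {x : Ix | valid o0 x}.
Definition ss := #|{: Jt}|.

Lemma preim_inv (g : 'I_n -> 'I_n) (A : {set 'I_n}) : involutive g ->
  g @^-1: (g @^-1: A) = A.
Proof. by move=> ginv; apply/finset.setP => y; rewrite !inE ginv. Qed.

Lemma mvK j : involutive (mv j).
Proof. by case=> [[A a] sg]; rewrite /mv /lay /av /cp /= preim_inv //; apply: tpermK. Qed.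

Lemma valid_mv j x : valid o0 (mv j x) = valid j x.
Proof.
rewrite /valid /mv /lay /= inE tpermL card_preimset //; exact: perm_inj.
Qed.

Lemma valid_mv' j x : valid j (mv j x) = valid o0 x.
Proof. by rewrite -valid_mv mvK. Qed.

Lemma card_valid j : #|[set x | valid j x]| = ss.
Proof.
transitivity #|[set x | valid o0 x]|.
  apply: (@card_inv _ (mv j)); first exact: mvK.
  by move=> x; rewrite valid_mv'.
by rewrite /ss card_sig; apply: eq_card => x; rewrite !inE.
Qed.

Definition Lam := #|[set x : Ix | #|lay x| == w]|.

Lemma card_valid_pairs : #|[set y : 'I_n * Ix | valid y.1 y.2]| = (n * ss)%N.
Proof.
rewrite card_setE -(pair_big xpredT xpredT (fun j x => (valid j x : nat))) /=.
under eq_bigr => j _ do rewrite -card_setE card_valid.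
by rewrite sum_nat_const card_ord.
Qed.

Lemma card_valid_pairs' : #|[set y : 'I_n * Ix | valid y.1 y.2]| = (w * Lam)%N.
Proof.
rewrite card_setE -(pair_big xpredT xpredT (fun j x => (valid j x : nat))) /=.
rewrite exchange_big /= /Lam card_setE big_distrr /=; apply: eq_bigr => x _.
rewrite /valid; case: eqP => [hA|_].
  under eq_bigr => j _ do rewrite andbT.
  by rewrite -card_setE muln1 -hA; apply: eq_card => j; rewrite !inE.
by rewrite muln0 big1 // => j _; rewrite andbF.
Qed.

Definition swp (j : 'I_n) (u : 'I_s) (x : Ix) : Ix :=
  ((lay x, [ffun l => if l == j then tperm u ord0 (av x l) else av x l]), cp x).

Lemma swpK j u : involutive (swp j u).
Proof.
case=> [[A a] sg]; rewrite /swp /lay /av /cp /=; congr (_, _, _).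
by apply/ffunP => l; rewrite !ffunE; case: eqP => // _; rewrite tpermK.
Qed.

Lemma card_aj j : (s * #|[set x | valid j x && (av x j == ord0)]|)%N = ss.
Proof.
rewrite -(card_valid j).
transitivity (\sum_(u : 'I_s) #|[set x | valid j x && (av x j == ord0)]|)%N.
  by rewrite sum_nat_const card_ord.
transitivity (\sum_(u : 'I_s) #|[set x | valid j x && (av x j == u)]|)%N.
  apply: eq_bigr => u _.
  apply: (@card_inv _ (swp j u)); first exact: swpK.
  move=> x; rewrite /swp /valid /lay /av /= ffunE eqxx.
  congr (_ && _).
  apply/eqP/eqP => [h|->]; last by rewrite tpermL.
  by rewrite -(tpermK u ord0 (x.1.2 j)) h tpermR.
rewrite [RHS]card_setE.
transitivity (\sum_(u : 'I_s) \sum_x ((valid j x && (av x j == u)) : nat))%N.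
  by apply: eq_bigr => u _; rewrite card_setE.
rewrite exchange_big /=; apply: eq_bigr => x _.
rewrite (bigD1 (av x j)) //= eqxx andbT big1 ?addn0 // => u /negbTE hu.
by rewrite eq_sym hu andbF.
Qed.

Definition gt (h h' : 'I_n) (x : Ix) : Ix :=
  ((tperm h h' @^-1: lay x, av x), (tperm h h' * cp x)%g).

Lemma gtK h h' : involutive (gt h h').
Proof.
case=> [[A a] sg]; rewrite /gt /lay /av /cp /= preim_inv; last exact: tpermK.
congr (_, _); apply/permP => y; rewrite !permM tpermK //.
Qed.

Lemma card_Q j (H : {set 'I_n}) h h' : j \notin H -> h \in H -> h' \in H ->
  #|[set x | Q j H h' x]| = #|[set x | Q j H h x]|.
Proof.
move=> jH hH h'H.
have tj : tperm h h' j = j.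
  by apply: tpermD; apply: contraNneq jH => <-.
have tH : forall y, (tperm h h' y \in H) = (y \in H).
  by move=> y; case: tpermP => [->|->|//]; rewrite ?hH ?h'H.
apply: (@card_inv _ (gt h h')); first exact: gtK.
case=> [[A a] sg].
rewrite /Q /valid /sel /gt /lay /av /cp /= !inE tj card_preimset; last exact: perm_inj.
rewrite tpermR hH h'H !andbT.
case: (j \in A) => //=; case: (_ == w) => //=; case: (_ == _) => //=.
case: (h \in A) => //=.
rewrite permM tpermR.
congr (_ < _)%N.
apply: (@card_inv _ (tperm h h')); first exact: tpermK.
by move=> y; rewrite !inE permM tpermK tH.
Qed.

Lemma sum_Q j (H : {set 'I_n}) :
  (\sum_(h in H) #|[set x | Q j H h x]| <=
     dd * #|[set x | valid j x && (av x j == ord0)]|)%N.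
Proof.
apply: leq_trans (_ : \sum_h #|[set x | Q j H h x]| <= _)%N.
  by rewrite [X in (_ <= X)%N](bigID (fun h => h \in H)) /= leq_addr.
under eq_bigr => h _ do rewrite card_setE.
rewrite exchange_big card_setE big_distrr /=; apply: leq_sum => x _.
rewrite /Q; case: (valid j x); case: (av x j == ord0) => /=; try by rewrite big1 ?muln0.
rewrite muln1 -card_setE.
apply: leq_trans (_ : #|sel H x| <= dd)%N; last by rewrite card_sel geq_minl.
by apply: subset_leq_card; apply/fintype.subsetP => y; rewrite inE.
Qed.

Lemma load j (H : {set 'I_n}) h : #|H| = d -> j \notin H ->
  (d * s * #|[set x | Q j H h x]| <= dd * ss)%N.
Proof.
move=> hH jH.
case hh: (h \in H); last first.
  rewrite (_ : [set x | Q j H h x] = finset.set0) ?cards0 ?muln0 //.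
  apply/finset.setP => x; rewrite !inE /Q; apply/negbTE; apply/and3P => [[_ _ hs]].
  by move: (fintype.subsetP (sel_sub H x) h hs); rewrite inE hh andbF.
have e : (\sum_(h' in H) #|[set x | Q j H h' x]| = d * #|[set x | Q j H h x]|)%N.
  rewrite -hH -sum_nat_const; apply: eq_bigr => h' h'H; exact: card_Q.
rewrite -(card_aj j) [(d * s)%N]mulnC -mulnA -e mulnCA leq_mul2l sum_Q orbT //.
Qed.

Definition is_exact_DSS' (n k d m S T : nat) (stor : 'I_n -> 'I_m -> 'I_S) : Prop :=
  (forall K : {set 'I_n}, #|K| = k ->
     forall x y : 'I_m, (forall j, j \in K -> stor j x = stor j y) -> x = y) /\
  (forall (j : 'I_n) (H : {set 'I_n}), #|H| = d -> j \notin H ->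
     exists helper : 'I_n -> 'I_S -> 'I_T,
       forall x y : 'I_m,
         (forall h, h \in H -> helper h (stor h x) = helper h (stor h y)) ->
         stor j x = stor j y).

Definition Amb := {ffun 'I_n * Ix -> F}.
Definition Inv := {y : 'I_n * Ix | ~~ valid y.1 y.2}.
Definition Chk := {c : Ix * 'I_r | #|lay c.1| == w}.
Definition Syn := ({ffun Inv -> F} * {ffun Chk -> F})%type.
Definition syn (x : Amb) : Syn :=
  ([ffun v : Inv => x (val v)], [ffun c : Chk => chk x (val c).1 (val c).2]).

Section Fiber.
Variable b : Syn.
Definition Fib := [set x : Amb | syn x == b].
Definition mm := #|Fib|.
Definition dm (v : 'I_mm) : Amb := enum_val v.

Lemma fib_ker x y : x \in Fib -> y \in Fib -> in_ker (fun q => x q - y q).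
Proof.
rewrite !inE => /eqP hx /eqP hy; have e : syn x = syn y by rewrite hx hy.
split.
  move=> j z hv; apply/eqP; rewrite subr_eq0; apply/eqP.
  have := congr1 (fun q : Syn => q.1 (Sub (j, z) hv : Inv)) e; by rewrite /= !ffunE.
move=> z t hA ht.
have hA' : #|lay (z, Ordinal ht).1| == w by apply/eqP.
have := congr1 (fun q : Syn => q.2 (Sub (z, Ordinal ht) hA' : Chk)) e; rewrite /= !ffunE /=.
move=> h; rewrite /chk; under eq_bigr => l _ do rewrite mulrBr; rewrite sumrB; move: h; rewrite /chk => ->; exact: subrr.

Qed.

Definition content (j : 'I_n) (x : Amb) : {ffun Jt -> F} :=
  [ffun t : Jt => x (j, mv j (val t))].
Definition SS := #|{: {ffun Jt -> F}}|.
Definition stor (j : 'I_n) (v : 'I_mm) : 'I_SS := enum_rank (content j (dm v)).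

Lemma content_eq j (x y : Amb) : content j x = content j y ->
  forall z, valid j z -> x (j, z) = y (j, z).
Proof.
move=> e z hv.
have hv' : valid o0 (mv j z) by rewrite valid_mv.
have := congr1 (fun c : {ffun Jt -> F} => c (Sub (mv j z) hv' : Jt)) e.
by rewrite /= !ffunE /= mvK.
Qed.

Lemma content_eq' j (x y : Amb) : (forall z, valid j z -> x (j, z) = y (j, z)) ->
  content j x = content j y.
Proof.
move=> h; apply/ffunP => t; rewrite !ffunE; apply: h.
by rewrite valid_mv'; exact: (valP t).
Qed.

Definition read (h : 'I_n) (c : {ffun Jt -> F}) (z : Ix) : F :=
  oapp c 0 (insub (mv h z) : option Jt).

Lemma read_content h (x : Amb) z : valid h z -> read h (content h x) z = x (h, z).
Proof.
move=> hv; have hv' : valid o0 (mv h z) by rewrite valid_mv.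
by rewrite /read insubT /= ffunE /= mvK.
Qed.

Definition TT := ((dd * ss) %/ (d * s))%N.

Lemma dss : is_exact_DSS' k d (p ^ TT) stor.
Proof.
split.
  move=> K hK v v' hst.
  apply: enum_val_inj; apply/ffunP => [[j z]].
  have hz := @recon_core (fun q => dm v q - dm v' q) K (fib_ker (enum_valP v) (enum_valP v')) hK.
  apply/eqP; rewrite -subr_eq0; apply/eqP; apply: hz => j' z' j'K.
  case hv: (valid j' z'); last first.
    by case: (fib_ker (enum_valP v) (enum_valP v')) => hinv _; apply: hinv; rewrite hv.
  have := hst j' j'K; rewrite /stor => /enum_rank_inj /content_eq => /(_ z' hv).
  by move=> ->; rewrite subrr.
move=> j H hH jH.
pose Ph h := {x : Ix | Q j H h x}.
pose msg h (c : {ffun Jt -> F}) : {ffun Ph h -> F} :=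
  [ffun q : Ph h => \sum_(u : 'I_s) read h c ((lay (val q), upd (av (val q)) j u), cp (val q))].
have leT : forall h, (#|{: {ffun Ph h -> F}}| <= p ^ TT)%N.
  move=> h; rewrite card_ffun card_Fp // leq_pexp2l ?prime_gt0 //.
  rewrite card_sig /TT leq_divRL; last by rewrite muln_gt0 /s andbT; apply: leq_trans hkd.
  rewrite mulnC; apply: leq_trans (load h hH jH).
  by rewrite leq_mul2l; apply/orP; right; rewrite cardsE.
exists (fun h (c : 'I_SS) => widen_ord (leT h) (enum_rank (msg h (enum_val c)))).
move=> v v' hhelp.
rewrite /stor; congr enum_rank; apply: content_eq'.
suff hz : forall z, dm v (j, z) - dm v' (j, z) = 0.
  by move=> z _; apply/eqP; rewrite -subr_eq0; apply/eqP; exact: hz.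
apply: (@repair_core (fun q => dm v q - dm v' q) j H (fib_ker (enum_valP v) (enum_valP v')) hH jH).
move=> h x hH' hq.
have := hhelp h hH' => /(congr1 val) /= /val_inj /enum_rank_inj.
rewrite /stor !enum_rankK => /(congr1 (fun c : {ffun Ph h -> F} => c (Sub x hq))).
rewrite !ffunE /= sumrB => e; apply/eqP; rewrite subr_eq0; apply/eqP.
move: hq e; rewrite /Q => /and3P [/andP [_ hA] _ hsel].
have hl : h \in lay x by move: (fintype.subsetP (sel_sub H x) h hsel); rewrite inE => /andP [].
have hv : forall u, valid h ((lay x, upd (av x) j u), cp x) by move=> u; rewrite /valid /lay /= hl hA.
by under eq_bigr => u _ do rewrite read_content //; under [in RHS]eq_bigr => u _ do rewrite read_content //.
Qed.

End Fiber.

Lemma ss_le : (n * ss <= n * #|{: Ix}|)%N.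
Proof.
rewrite -card_valid_pairs; apply: leq_trans (max_card _) _.
by rewrite card_prod card_ord.
Qed.

Lemma card_Amb : #|{: Amb}| = (p ^ (n * #|{: Ix}|))%N.
Proof. by rewrite card_ffun card_Fp // card_prod card_ord. Qed.

Lemma card_Syn : #|{: Syn}| = (p ^ ((n * #|{: Ix}| - n * ss) + r * Lam))%N.
Proof.
rewrite card_prod !card_ffun card_Fp // -expnD; congr (_ ^ (_ + _))%N.
  rewrite card_sig -card_valid_pairs.
  have := cardC [pred y : 'I_n * Ix | valid y.1 y.2]; rewrite card_prod card_ord => <-.
  rewrite (_ : #|[set y : 'I_n * Ix | valid y.1 y.2]| = #|[pred y : 'I_n * Ix | valid y.1 y.2]|).
    by rewrite addKn; apply: eq_card => y; rewrite !inE.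
  by apply: eq_card => y; rewrite !inE.
rewrite card_sig /Lam mulnC.
have := cardsX [set x : Ix | #|lay x| == w] [set: 'I_r]; rewrite cardsT card_ord => <-.
by apply: eq_card => -[x t]; rewrite !inE andbT.
Qed.

Lemma key : exists b, (p ^ (n * ss) <= p ^ (r * Lam) * mm b)%N.
Proof.
have [b hb] := @pigeon _ _ syn (syn 0).
exists b; move: hb; rewrite card_Amb card_Syn expnD -mulnA.
rewrite -{1}(subnK ss_le) expnD leq_pmul2l //.
by rewrite expn_gt0 prime_gt0.
Qed.

Lemma Lam_pos : (0 < Lam)%N.
Proof.
have : (0 < #|[set A : {set 'I_n} | #|A| == w]|)%N.
  rewrite card_draws card_ord bin_gt0 /w; move: hik hkd hdn; lia.
move/card_gt0P => [A]; rewrite inE => hA.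
apply/card_gt0P; exists ((A, [ffun _ => ord0]), 1%g); by rewrite inE.
Qed.

Lemma ss_pos : (0 < ss)%N.
Proof.
have := card_valid_pairs'; rewrite card_valid_pairs => e.
have := Lam_pos; have : (0 < w)%N by rewrite /w; lia.
move: e; rewrite /w; nia.
Qed.

Lemma SS_eq : SS = (p ^ ss)%N.
Proof. by rewrite /SS card_ffun card_Fp. Qed.

Lemma nLam : (n * ss = w * Lam)%N.
Proof. by rewrite -card_valid_pairs card_valid_pairs'. Qed.

Lemma TT_le : (d * TT * s <= dd * ss)%N.
Proof. by rewrite [(d * _)%N]mulnC -mulnA leq_divM. Qed.

End Cons.

End LC.
Import LC.


Theorem theorem3p2 (R : realType) (n k d i : nat) (alpha : R) :
  (1 <= k)%N -> (k <= d)%N -> (d < n)%N -> 0 < alpha ->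
  (1 <= i)%N -> (i <= k)%N ->
  (((n * i)%:R * alpha / (n - k + i)%:R)%:E <=
   C_exact n k d alpha ((d - k + i)%:R * alpha / (d - k + 1)%:R))%E.
Proof.
move=> hk hkd hdn ha hi hik.
have n0 : (0 < n)%N by apply: leq_trans hdn.
pose o0 : 'I_n := Ordinal n0.
have [p hps hp] := prime_above (n * LC.s k d).
have [b hb] := key k d i o0 hp.
have hdss := dss o0 hk hkd hdn hi hik hp hps b.
have sspos := ss_pos o0 hk hkd hdn hi hik hp hps.
have hnL := nLam k d i o0.
have hTT := TT_le k d i o0.
have hSS := SS_eq k d i o0 hp.
set ss := ss k d i o0 in sspos hnL hTT hSS hb.
set TT := TT k d i o0 in hdss hTT.
set mm := mm b in hb hdss.
set Lam := Lam n k d i in hnL hb.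
have p1 : (1 < p)%N := prime_gt1 hp.
pose P : R := p%:R.
have P0 : 0 < P by rewrite ltr0n; apply: leq_trans p1.
have lp : 0 < ln P by apply: ln_gt0; rewrite ltr1n.
have lnX : forall e : nat, ln ((p ^ e)%:R : R) = e%:R * ln P.
  by move=> e; rewrite natrX lnXn // mulr_natl.
have mm0 : (0 < mm)%N.
  have h0 : (0 < p ^ (n * ss))%N by rewrite expn_gt0 prime_gt0.
  by move: (leq_trans h0 hb); rewrite muln_gt0 => /andP [].
have mmR : 0 < (mm%:R : R) by rewrite ltr0n.
have hlnm : (n * ss)%N%:R * ln P <= (r n k * Lam)%N%:R * ln P + ln (mm%:R : R).
  have pe : forall e, (0 < p ^ e)%N by move=> e; rewrite expn_gt0 prime_gt0.
  rewrite -!lnX -lnM ?posrE ?ltr0n ?pe //.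
  by rewrite -natrM ler_ln ?posrE ?ltr0n ?muln_gt0 ?pe ?mm0 ?ler_nat.
pose u : R := ss%:R * ln P / alpha.
have u0 : 0 < u by rewrite divr_gt0 // mulr_gt0 // ltr0n.
apply: (@le_trans _ _ ((ln (mm%:R : R) / u)%:E)); last first.
  apply: ereal_sup_ubound.
  exists mm, (SS k d i p o0), (p ^ TT)%N, u, (@stor _ _ _ _ _ o0 b); split => //; split; first exact: hdss.
  split.
    by rewrite hSS lnX /u [alpha * _]mulrC divfK // lt0r_neq0.
  split => //.
  have s1 : (d - k + 1)%N = LC.s k d by rewrite addn1.
  have sR : 0 < (LC.s k d)%:R :> R by rewrite ltr0n.
  have hT : (d * TT * LC.s k d)%N%:R * ln P <= (dd k d i * ss)%N%:R * ln P.
    by rewrite ler_wpM2r ?ler_nat // ltW.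
  rewrite lnX /u s1.
  have -> : (d - k + i)%:R * alpha / (LC.s k d)%:R * (ss%:R * ln P / alpha) =
      (dd k d i * ss)%N%:R * ln P / (LC.s k d)%:R.
    by rewrite natrM /dd; field; rewrite lt0r_neq0 // lt0r_neq0.
  rewrite ler_pdivlMr //; move: hT; rewrite !natrM => hT.
  have -> : d%:R * (TT%:R * ln P) * (LC.s k d)%:R = d%:R * TT%:R * (LC.s k d)%:R * ln P by ring.
  exact: hT.
rewrite lee_fin.
have ssR : 0 < ss%:R :> R by rewrite ltr0n.
have wR : 0 < (n - k + i)%:R :> R by rewrite ltr0n addn_gt0 hi orbT.
have M : (n * i)%:R * ss%:R * ln P <= (n - k + i)%:R * ln (mm%:R : R).
  have hnR : n%:R * ss%:R = ((n - k)%:R + i%:R) * Lam%:R :> R.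
    by rewrite -!natrM -natrD hnL /w natrM.
  move: hlnm; rewrite !natrM /r => h1.
  have h2 := ler_wpM2l (_ : 0 <= (n - k)%:R + i%:R :> R) h1.
  have h3 := congr1 (fun t => (n - k)%:R * ln P * t) hnR; simpl in h3.
  rewrite natrD; nra.
have -> : ln (mm%:R : R) / u = ln (mm%:R : R) * alpha / (ss%:R * ln P).
  by rewrite /u; field; rewrite ?lt0r_neq0.
rewrite ler_pdivlMr ?mulr_gt0 // mulrAC ler_pdivrMr //.
have -> : ln (mm%:R : R) * alpha * (n - k + i)%:R = alpha * ((n - k + i)%:R * ln (mm%:R : R)) by ring.
have -> : (n * i)%:R * alpha * (ss%:R * ln P) = alpha * ((n * i)%:R * ss%:R * ln P) by ring.
by rewrite ler_pM2l.
Qed.
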